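(* Let $\delta\ge0$, let $\rho\in D_\delta$ and let $\sigma\in[0,1+\delta)$. Then there is $C$ such that $E_{n,\sigma}\le C\Delta_n^{\sigma/(1+\delta)}$ for all $n\ge0$.
   Context: An irrational $\rho$ is in $D_\delta$ if there is $C>0$ with $|\rho-p/q|\ge Cq^{-2-\delta}$ for all rationals $p/q$. Write $\rho\in(0,1)$ as a continued fraction $\rho=[k_1,k_2,\dots]$ with convergents $p_n/q_n$, where $p_0=0,q_0=1,p_{-1}=1,q_{-1}=0$, $p_n=k_np_{n-1}+p_{n-2}$, $q_n=k_nq_{n-1}+q_{n-2}$. Set $\Delta_n=|q_n\rho-p_n|$ for $n\ge-1$ (so $\Delta_{-1}=1$), and $E_{n,\sigma}=\sum_{k=0}^n\frac{\Delta_n}{\Delta_{n-k}}\Delta_{n-k-1}^\sigma$. *)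

(* Defs.v *)
From Stdlib Require Import Reals Lra ZArith.
Open Scope R_scope.

Definition irrational (rho : R) : Prop :=
  ~ exists (p q : Z), q <> 0%Z /\ rho = IZR p / IZR q.

Definition in_D (delta rho : R) : Prop :=
  irrational rho /\
  exists C, 0 < C /\
    forall (p : Z) (q : nat), (1 <= q)%nat ->
      Rabs (rho - IZR p / INR q) >= C * Rpower (INR q) (- 2 - delta).

Fixpoint cf_x (rho : R) (n : nat) : R :=
  match n with
  | O => rho
  | S m => / cf_x rho m - IZR (Int_part (/ cf_x rho m))
  end.

(* partial quotients: cf_k rho (S n) = k_{n+1} = floor(1 / x_n), so
   rho = [k_1, k_2, ...]. *)
Definition cf_k (rho : R) (n : nat) : R :=
  match n with
  | O => 0
  | S m => IZR (Int_part (/ cf_x rho m))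
  end.

(* cf_pq rho n = ((p_{n-1}, q_{n-1}), (p_n, q_n)),
   with p_{-1}=1, q_{-1}=0, p_0=0, q_0=1 and
   p_n = k_n p_{n-1} + p_{n-2}, q_n = k_n q_{n-1} + q_{n-2}. *)
Fixpoint cf_pq (rho : R) (n : nat) : (R * R) * (R * R) :=
  match n with
  | O => ((1, 0), (0, 1))
  | S m =>
      let '((a, b), (c, d)) := cf_pq rho m in
      ((c, d), (cf_k rho (S m) * c + a, cf_k rho (S m) * d + b))
  end.

Definition cf_p (rho : R) (n : nat) : R := fst (snd (cf_pq rho n)).
Definition cf_q (rho : R) (n : nat) : R := snd (snd (cf_pq rho n)).

Definition cf_Delta (rho : R) (n : nat) : R := Rabs (cf_q rho n * rho - cf_p rho n).

(* Delta_prev rho n = Delta_{n-1} (for n >= 0, so Delta_prev rho 0 = Delta_{-1} = 1) *)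
Definition Delta_prev (rho : R) (n : nat) : R :=
  let '((a, b), _) := cf_pq rho n in Rabs (b * rho - a).

Definition E_ns (rho sigma : R) (n : nat) : R :=
  sum_f_R0 (fun k => cf_Delta rho n / cf_Delta rho (n - k)
                      * Rpower (Delta_prev rho (n - k)) sigma) n.

(* Main.v *)
Require Import Defs.
From Stdlib Require Import Reals Lra Lia Psatz ZArith.
Open Scope R_scope.

Lemma inv (rho:R) : 0<rho<1 -> irrational rho -> forall n,
  match cf_pq rho n with ((a,b),(c,d)) =>
    (exists za zb zc zd : Z, a = IZR za /\ b = IZR zb /\ c = IZR zc /\ d = IZR zd
        /\ (1 <= zd)%Z /\ (0 <= zb)%Z) /\
    d*rho - c = - cf_x rho n * (b*rho - a) /\ 0 < cf_x rho n < 1 /\ 0 < Rabs (b*rho - a) /\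
    d * Rabs (b*rho-a) + b * Rabs(d*rho - c) = 1
  end.
Proof.
intros Hr Hirr n; induction n as [|n IH].
- simpl. split; [exists 1%Z, 0%Z, 0%Z, 1%Z; repeat split; lia|].
  replace (Rabs (0*rho-1)) with 1 by (rewrite Rabs_left; lra).
  repeat split; lra.
- cbn [cf_pq]. destruct (cf_pq rho n) as [[a b] [c d]].
  destruct IH as [[za [zb [zc [zd [Ea [Eb [Ec [Ed [Hzd Hzb]]]]]]]]] [HD [Hx [HA Hid]]]].
  unfold cf_k. cbn [cf_x].
  set (x := cf_x rho n) in *.
  set (z := Int_part (/ x)).
  assert (Hinv : / x * x = 1) by (field; lra).
  assert (Hgt : 1 < / x) by nra.
  destruct (base_Int_part (/x)) as [Hz1 Hz2]. fold z in Hz1, Hz2.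
  assert (Hzpos : (1 <= z)%Z).
  { assert (0 < IZR z) by lra. apply lt_IZR in H. lia. }
  assert (HzR : 1 <= IZR z) by (apply IZR_le; lia).
  set (x' := / x - IZR z).
  assert (HND : (IZR z * d + b) * rho - (IZR z * c + a) = - x' * (d*rho - c)).
  { unfold x'. replace ((IZR z * d + b) * rho - (IZR z * c + a)) with (IZR z*(d*rho-c) + (b*rho-a)) by ring.
    rewrite HD. field. lra. }
  assert (HB : Rabs (d*rho - c) = x * Rabs (b*rho - a)).
  { rewrite HD, Rabs_mult, Rabs_Ropp, (Rabs_pos_eq x) by lra. reflexivity. }
  assert (Hx'0 : 0 <= x') by (unfold x'; lra).
  assert (Hx'1 : x' < 1) by (unfold x'; lra).
  assert (Hx'n : x' <> 0).
  { intro H0. apply Hirr. exists (z * zc + za)%Z, (z * zd + zb)%Z. split; [lia|].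
    rewrite H0 in HND. rewrite !plus_IZR, !mult_IZR. rewrite <- Ea, <- Eb, <- Ec, <- Ed.
    assert (0 < IZR z * d + b).
    { assert (1 <= d) by (rewrite Ed; apply IZR_le; lia).
      assert (0 <= b) by (rewrite Eb; apply IZR_le; lia). nra. }
    field_simplify_eq; [|lra]. lra. }
  split.
  { exists zc, zd, (z*zc+za)%Z, (z*zd+zb)%Z. rewrite !plus_IZR, !mult_IZR.
    rewrite <- Ea, <- Eb, <- Ec, <- Ed. repeat split; try lia; reflexivity. }
  split; [exact HND|]. split; [lra|]. split.
  { rewrite HB. apply Rmult_lt_0_compat; lra. }
  rewrite HND, Rabs_mult, Rabs_Ropp, (Rabs_pos_eq x') by lra. rewrite HB.
  unfold x'.
  replace ((IZR z * d + b) * (x * Rabs (b * rho - a)) +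
           d * ((/ x - IZR z) * (x * Rabs (b * rho - a))))
    with (d * Rabs (b*rho - a) * (/x * x) + b * (x * Rabs (b * rho - a))) by ring.
  rewrite Hinv, <- HB. lra.
Qed.

Lemma D1 rho : 0<rho<1 -> irrational rho -> forall n,
  cf_Delta rho n = cf_x rho n * Delta_prev rho n /\ 0 < Delta_prev rho n /\ 0 < cf_x rho n < 1.
Proof.
intros H1 H2 n. pose proof (inv rho H1 H2 n) as H.
unfold cf_Delta, Delta_prev, cf_p, cf_q.
destruct (cf_pq rho n) as [[a b] [c d]]. simpl.
destruct H as [_ [HD [Hx [HA _]]]].
rewrite HD, Rabs_mult, Rabs_Ropp, (Rabs_pos_eq (cf_x rho n)) by lra. tauto.
Qed.

Lemma D2 rho n : Delta_prev rho (S n) = cf_Delta rho n.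
Proof.
unfold cf_Delta, Delta_prev, cf_p, cf_q. cbn [cf_pq].
destruct (cf_pq rho n) as [[a b] [c d]]. reflexivity.
Qed.

Lemma half rho : 0<rho<1 -> irrational rho -> forall n,
  cf_x rho n * cf_x rho (S n) <= 1/2.
Proof.
intros H1 H2 n. destruct (D1 rho H1 H2 n) as [_ [_ Hx]].
destruct (D1 rho H1 H2 (S n)) as [_ [_ Hx']].
revert Hx'. cbn [cf_x]. set (x := cf_x rho n) in *. intro Hx'.
assert (Hinv : / x * x = 1) by (field; lra).
destruct (base_Int_part (/x)) as [Hz1 Hz2].
assert (0 < IZR (Int_part (/x))) by nra.
assert (Hz : 1 <= IZR (Int_part (/x))).
{ apply lt_IZR in H. apply IZR_le. lia. }
set (k := IZR (Int_part (/x))) in *.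
replace (x * (/x - k)) with (/x * x - k*x) by ring. rewrite Hinv.
destruct (Rle_or_lt (1/2) (k*x)); [lra|].
assert (x < 1/2) by nra. nra.
Qed.

Lemma Dpos rho : 0<rho<1 -> irrational rho -> forall n, 0 < cf_Delta rho n.
Proof. intros H1 H2 n. destruct (D1 rho H1 H2 n) as [E [P X]]. rewrite E. nra. Qed.

Lemma Dstep rho : 0<rho<1 -> irrational rho -> forall n, cf_Delta rho (S n) <= cf_Delta rho n.
Proof. intros H1 H2 n. destruct (D1 rho H1 H2 (S n)) as [E [P X]]. rewrite E, D2 in *. nra. Qed.

Lemma Dmono rho : 0<rho<1 -> irrational rho -> forall m n, (m <= n)%nat -> cf_Delta rho n <= cf_Delta rho m.
Proof.
intros H1 H2 m n Hmn. induction Hmn; [lra|].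
pose proof (Dstep rho H1 H2 m0). lra.
Qed.

Lemma D2step rho : 0<rho<1 -> irrational rho -> forall n,
  cf_Delta rho (S (S n)) <= cf_Delta rho n / 2.
Proof.
intros H1 H2 n. destruct (D1 rho H1 H2 (S (S n))) as [E [P X]].
destruct (D1 rho H1 H2 (S n)) as [E' [P' X']].
rewrite E, D2, E', D2. pose proof (half rho H1 H2 (S n)).
pose proof (Dpos rho H1 H2 n). nra.
Qed.

Lemma lowerA delta rho : 0 <= delta -> 0<rho<1 -> in_D delta rho ->
  exists c, 0 < c /\ forall n, c * Rpower (Delta_prev rho n) (1+delta) <= cf_Delta rho n.
Proof.
intros Hd H1 [H2 [C [HC HD]]]. exists C. split; [exact HC|]. intro n.
pose proof (inv rho H1 H2 n) as H. pose proof (D1 rho H1 H2 n) as [_ [HP _]].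
revert HP.
unfold cf_Delta, Delta_prev, cf_p, cf_q.
destruct (cf_pq rho n) as [[a b] [c d]]. simpl.
destruct H as [[za [zb [zc [zd [Ea [Eb [Ec [Ed [Hzd Hzb]]]]]]]]] [HDD [Hx [HA Hid]]]].
intro HP.
pose proof (HD zc (Z.to_nat zd)) as HB.
rewrite INR_IZR_INZ, Z2Nat.id in HB by lia.
rewrite <- Ed, <- Ec in HB.
assert (Hd1 : 1 <= d) by (rewrite Ed; apply IZR_le; lia).
assert (Hb0 : 0 <= b) by (rewrite Eb; apply IZR_le; lia).
assert (HB' : Rabs (rho - c/d) >= C * Rpower d (-2 - delta)).
{ apply HB. lia. }
assert (Hdelta : Rabs (d*rho - c) = d * Rabs (rho - c/d)).
{ replace (d*rho - c) with (d * (rho - c/d)) by (field; lra).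
  rewrite Rabs_mult, (Rabs_pos_eq d) by lra. reflexivity. }
assert (Hle : d * Rabs (b*rho - a) <= 1).
{ pose proof (Rabs_pos (d*rho - c)). nra. }
assert (HP1 : Rabs (b*rho - a) <= / d).
{ apply (Rmult_le_reg_l d); [lra|]. rewrite Rinv_r by lra. lra. }
assert (Hpow : Rpower (Rabs (b * rho - a)) (1 + delta) <= Rpower (/d) (1+delta)).
{ apply Rle_Rpower_l; lra. }
assert (Heq : d * Rpower d (-2 - delta) = Rpower (/d) (1+delta)).
{ rewrite <- (Rpower_1 d) at 1 by lra. rewrite <- Rpower_plus.
  unfold Rpower. rewrite ln_Rinv by lra. f_equal. ring. }
rewrite Hdelta.
assert (0 < d) by lra.
apply Rle_trans with (C * Rpower (/d) (1+delta)).
{ apply Rmult_le_compat_l; lra. }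
rewrite <- Heq. nra.
Qed.

Lemma sum_nonneg_mono (u:nat->R) M : (forall m, 0 <= u m) ->
  sum_f_R0 u M <= sum_f_R0 u (M+2).
Proof.
intro Hu. replace (M+2)%nat with (S (S M)) by lia. rewrite !tech5.
pose proof (Hu (S M)); pose proof (Hu (S (S M))); lra.
Qed.

Lemma geo (u:nat->R) r N : 0<=r<1 -> (forall m, 0 <= u m) -> u 0%nat <= 1 -> u 1%nat <= 1 ->
  (forall m, (m+2 <= N)%nat -> u (m+2)%nat <= r*u m) -> sum_f_R0 u N <= 2/(1-r).
Proof.
intros Hr Hu H0 H1 Hrec.
assert (Q : forall M, (M+2<=N)%nat -> sum_f_R0 u (M+2) <= 2 + r * sum_f_R0 u M).
{ induction M as [|M IH]; intro HM.
  - simpl. pose proof (Hrec 0%nat HM). simpl in H. lra.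
  - replace (S M + 2)%nat with (S (M+2)) by lia. rewrite tech5.
    pose proof (IH ltac:(lia)). pose proof (Hrec (S M) HM).
    replace (S M + 2)%nat with (S (M+2)) in H2 by lia.
    replace (sum_f_R0 u (S M)) with (sum_f_R0 u M + u (S M)) by (rewrite tech5; reflexivity).
    nra. }
assert (H2 : 2 <= 2/(1-r)).
{ apply (Rmult_le_reg_r (1-r)); [lra|]. field_simplify; [|lra]. nra. }
destruct N as [|[|N']].
- simpl. lra.
- simpl. lra.
- replace (S (S N')) with (N'+2)%nat by lia.
  pose proof (Q N' ltac:(lia)). pose proof (sum_nonneg_mono u N' Hu).
  assert (0 <= sum_f_R0 u N').
  { apply cond_pos_sum. exact Hu. }
  assert (sum_f_R0 u (N'+2) * (1-r) <= 2) by nra.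
  apply (Rmult_le_reg_r (1-r)); [lra|]. field_simplify; [|lra]. lra.
Qed.

Lemma Rpower_pos x y : 0 < Rpower x y.
Proof. unfold Rpower. apply exp_pos. Qed.

Lemma lndiv A B : 0 < A -> 0 < B -> ln (A/B) = ln A - ln B.
Proof. intros. unfold Rdiv. rewrite ln_mult, ln_Rinv; try lra. apply Rinv_0_lt_compat; lra. Qed.

Lemma ratio_id A B s : 0 < A -> 0 < B ->
  A / B * Rpower B s = Rpower (A/B) (1-s) * Rpower A s.
Proof.
intros HA HB. unfold Rpower. rewrite lndiv by lra.
rewrite <- exp_plus.
replace ((1 - s) * (ln A - ln B) + s * ln A) with (ln A + (- ln B) + s * ln B) by ring.
rewrite !exp_plus, exp_Ropp, !exp_ln by lra. field. lra.
Qed.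

Lemma div_pow B c s : 0 < B -> 0 < c -> Rpower (B/c) s = Rpower B s * Rpower c (-s).
Proof.
intros HB Hc. unfold Rpower. rewrite lndiv by lra. rewrite <- exp_plus. f_equal. ring.
Qed.

Lemma term_bound A B P c delta sigma : 0 <= delta -> 0 <= sigma ->
  0 < A -> 0 < B -> 0 < P -> 0 < c -> c * Rpower P (1+delta) <= B ->
  A/B * Rpower P sigma <= Rpower (A/B) (1 - sigma/(1+delta)) * (Rpower c (- (sigma/(1+delta))) * Rpower A (sigma/(1+delta))).
Proof.
intros Hd Hs HA HB HP Hc Hle.
set (s := sigma/(1+delta)).
assert (Hs0 : 0 <= s) by (unfold s; apply Rmult_le_pos; [lra| left; apply Rinv_0_lt_compat; lra]).
assert (E : Rpower P sigma = Rpower (Rpower P (1+delta)) s).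
{ rewrite Rpower_mult. f_equal. unfold s. field. lra. }
assert (L : Rpower (Rpower P (1+delta)) s <= Rpower (B/c) s).
{ apply Rle_Rpower_l; [lra|]. split; [apply Rpower_pos|].
  apply (Rmult_le_reg_l c); [lra|]. replace (c*(B/c)) with B by (field; lra). lra. }
rewrite E. rewrite div_pow in L by lra.
apply Rle_trans with (A/B * (Rpower B s * Rpower c (-s))).
{ apply Rmult_le_compat_l; [|lra]. left. apply Rdiv_lt_0_compat; lra. }
replace (A / B * (Rpower B s * Rpower c (- s))) with ((A/B * Rpower B s) * Rpower c (-s)) by ring.
rewrite ratio_id by lra. right. ring.
Qed.

Theorem lemma7 (delta rho sigma : R) :
  0 <= delta -> 0 < rho < 1 -> in_D delta rho ->
  0 <= sigma < 1 + delta ->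
  exists C : R, forall n : nat,
    E_ns rho sigma n <= C * Rpower (cf_Delta rho n) (sigma / (1 + delta)).
Proof.
intros Hd Hr HD Hs.
destruct (lowerA delta rho Hd Hr HD) as [c [Hc Hlow]].
pose proof (proj1 HD) as Hirr.
set (s := sigma/(1+delta)).
set (a := 1 - s).
assert (Ha : 0 < a).
{ unfold a, s. assert (sigma/(1+delta) < 1); [|lra].
  apply (Rmult_lt_reg_r (1+delta)); [lra|]. field_simplify; lra. }
set (r := Rpower (1/2) a).
assert (Hr1 : r < 1).
{ unfold r, Rpower. apply Rlt_le_trans with (exp 0); [|rewrite exp_0; lra]. apply exp_increasing.
  assert (ln (1/2) < 0) by (rewrite <- ln_1; apply ln_increasing; lra). rewrite <- (Rmult_0_r a). apply Rmult_lt_compat_l; auto. }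
assert (Hr0 : 0 <= r) by (left; apply Rpower_pos).
exists (Rpower c (-s) * (2/(1-r))). intro n.
set (Dn := cf_Delta rho n).
assert (HDn : 0 < Dn) by apply (Dpos rho Hr Hirr).
set (u := fun k => Rpower (Dn / cf_Delta rho (n-k)) a).
unfold E_ns.
apply Rle_trans with (sum_f_R0 (fun k => u k * (Rpower c (-s) * Rpower Dn s)) n).
{ apply sum_Rle. intros k Hk. unfold u.
  apply term_bound; auto; try lra.
  - apply (Dpos rho Hr Hirr).
  - apply (D1 rho Hr Hirr (n-k)). }
rewrite <- scal_sum.
assert (Hsum : sum_f_R0 u n <= 2/(1-r)).
{ apply geo; auto.
  - intro m; left; apply Rpower_pos.
  - assert (forall k, u k <= 1).
    { intro k. unfold u. apply Rle_trans with (Rpower 1 a);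
        [|right; unfold Rpower; rewrite ln_1, Rmult_0_r, exp_0; reflexivity].
      apply Rle_Rpower_l; [lra|]. pose proof (Dpos rho Hr Hirr (n-k)).
      pose proof (Dmono rho Hr Hirr (n-k) n ltac:(lia)). fold Dn in H0.
      split; [apply Rdiv_lt_0_compat; lra|].
      apply (Rmult_le_reg_r (cf_Delta rho (n-k))); [lra|]. field_simplify; lra. }
    auto.
  - assert (forall k, u k <= 1).
    { intro k. unfold u. apply Rle_trans with (Rpower 1 a);
        [|right; unfold Rpower; rewrite ln_1, Rmult_0_r, exp_0; reflexivity].
      apply Rle_Rpower_l; [lra|]. pose proof (Dpos rho Hr Hirr (n-k)).
      pose proof (Dmono rho Hr Hirr (n-k) n ltac:(lia)). fold Dn in H0.
      split; [apply Rdiv_lt_0_compat; lra|].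
      apply (Rmult_le_reg_r (cf_Delta rho (n-k))); [lra|]. field_simplify; lra. }
    auto.
  - intros m Hm. unfold u, r.
    rewrite Rpower_mult_distr by (first [lra | apply Rdiv_lt_0_compat; [lra|apply (Dpos rho Hr Hirr)]]).
    apply Rle_Rpower_l; [lra|].
    pose proof (D2step rho Hr Hirr (n - (m+2))).
    replace (S (S (n - (m + 2)))) with (n - m)%nat in H by lia.
    pose proof (Dpos rho Hr Hirr (n-m)). pose proof (Dpos rho Hr Hirr (n-(m+2))).
    split; [apply Rdiv_lt_0_compat; lra|].
    unfold Rdiv. rewrite Rmult_1_l.
    replace (/ 2 * (Dn * / cf_Delta rho (n - m))) with (Dn / (2 * cf_Delta rho (n-m))) by (field; lra).
    unfold Rdiv. apply Rmult_le_compat_l; [lra|].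
    apply Rinv_le_contravar; lra. }
assert (0 < Rpower c (-s) * Rpower Dn s) by (apply Rmult_lt_0_compat; apply Rpower_pos).
fold s. 
replace (Rpower c (- s) * (2 / (1 - r)) * Rpower Dn s) with ((Rpower c (-s) * Rpower Dn s) * (2/(1-r))) by ring.
apply Rmult_le_compat_l; lra.
Qed.
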